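(* After the event-update procedure has processed an event $e\in E_A$ (with all events processed along a linear extension of the causal order of $M$, each by the monitor of its own lifeline), the following hold for every lifeline $B$: (i) $\mathsf{vc}_A(B)=|\{f\in E_B\mid f\leq_M e\}|$; (ii) if $\mathsf{vc}_A(B)=0$, then all entries $\mathsf{var}_A(B,x)$ and $\mathsf{view}_A(B,\psi)$ are absent; (iii) if $\mathsf{vc}_A(B)=k>0$, then $\mathsf{var}_A(B,x)$ is defined and equal to $\mathsf{val}(e^B_k)(x)$ for every $x\in\mathsf{Vars}(\Phi)$; (iv) if $\mathsf{vc}_A(B)=k>0$, then $\mathsf{view}_A(B,\psi)$ is defined and $\mathsf{view}_A(B,\psi)=1$ iff $M,e^B_k\models\psi$, for every $\psi\in\mathsf{sub}(\Phi)$.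
   Context: Setting. $\mathscr L$ is a finite set of lifelines. A message sequence chart (MSC) is $M=(E,\to,\lhd,\mathsf{kind},\mathsf{pid},\mathsf{val})$ with $E$ a finite set of events, $\mathsf{pid}:E\to\mathscr L$, $E_A=\{e\in E\mid \mathsf{pid}(e)=A\}$. The relation $\to$ relates only events on the same lifeline, and for each $A$ its restriction to $E_A$ is the immediate-successor relation of a finite linear order $\leq_A$ (strict version $<_A$). $\mathsf{kind}(e)\in\{\mathsf{act},\mathsf{recv},\mathsf{choice}\}\cup(\{\mathsf{send}\}\times\mathscr L)$. The message relation $\lhd$ is a partial matching: if $s\lhd r$ then $\mathsf{kind}(s)=(\mathsf{send},\mathsf{pid}(r))$, $\mathsf{kind}(r)=\mathsf{recv}$, $\mathsf{pid}(s)\neq\mathsf{pid}(r)$; every receive has exactly one matching send, every send at most one matching receive (not necessarily FIFO). The graph of $\to$ and $\lhd$ edges is acyclic; the causal order $\leq_M$ is its reflexive transitive closure. $\nu_e=\mathsf{val}(e)$ is the valuation (local store of $\mathsf{pid}(e)$ after $e$). $e^B_k$ is the $k$-th event of lifeline $B$ (indexing from 1). Causal Past Logic (CPL): terms $t::=x\mid A.x$; atoms $\alpha::=p(t_1,\dots,t_n)$; formulas $\varphi::=\alpha\mid @_A\varphi\mid \mathsf{Y}\varphi\mid\varphi_1\mathbin{\mathsf{S}}\varphi_2\mid\varphi_1\wedge\varphi_2\mid\varphi_1\vee\varphi_2\mid\neg\varphi$. For $e$ with $\mathsf{pid}(e)=A$: $\mathsf{last}_{\mathsf{loc}}(e)=\max\{f\in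 E_A\mid f<_A e\}$ and $\mathsf{last}_B(e)=\max\{f\in E_B\mid f\leq_M e\}$ (when they exist). Term $x$ evaluates to $\nu_e(x)$, term $A.x$ to $\nu_{\mathsf{last}_A(e)}(x)$ when defined; an atom is false if a term is undefined, otherwise its truth is fixed by the application. $M,e\models\mathsf{Y}\varphi$ iff $\mathsf{last}_{\mathsf{loc}}(e)$ exists and satisfies $\varphi$; $M,e\models @_A\varphi$ iff $\mathsf{last}_A(e)$ exists and satisfies $\varphi$; for $e\in E_A$, $M,e\models\varphi_1\mathbin{\mathsf{S}}\varphi_2$ iff some $f\leq_A e$ in $E_A$ satisfies $\varphi_2$ and all $g\in E_A$ with $f<_A g\leq_A e$ satisfy $\varphi_1$; Booleans as usual. Monitor. $\Phi$ is a finite set of CPL formulas, $\mathsf{sub}(\Phi)$ its subformulas, $\mathsf{Vars}(\Phi)$ the variable names in terms $B.x$. Each lifeline $A$ keeps a vector clock $\mathsf{vc}_A:\mathscr L\to\mathbb N$ (initially all $0$), partial tables $\mathsf{view}_A:\mathscr L\times\mathsf{sub}(\Phi)\rightharpoonup\{0,1\}$ and $\mathsf{var}_A:\mathscr L\times\mathsf{Vars}(\Phi)\rightharpoonup\mathsf{Val}$ (initially empty), a local store $\sigma_A$, and a total map $\mathsf{old}_A:\mathsf{sub}(\Phi)\to\{0,1\}$. Formula evaluation $\mathsf{Eval}_A(\psi,e,\mathsf{old}_A)$: atoms read unqualified variables from $\sigma_A$ and $B.x$ from $\mathsf{var}_A(B,x)$ (missing entry makes the atom false); $\mathsf{Y}\theta\mapsto(\mathsf{vc}_A(A)>1)\wedge\mathsf{old}_A(\theta)$;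 $@_B\theta\mapsto$ $\mathsf{Eval}_A(\theta,\cdot)$ if $B=A$, $0$ if $\mathsf{vc}_A(B)=0$, else $\mathsf{view}_A(B,\theta)$; $\theta_1\mathbin{\mathsf{S}}\theta_2\mapsto\mathsf{Eval}_A(\theta_2,\cdot)\vee(\mathsf{Eval}_A(\theta_1,\cdot)\wedge(\mathsf{vc}_A(A)>1)\wedge\mathsf{old}_A(\theta_1\mathbin{\mathsf{S}}\theta_2))$; Booleans recursively. Event-update procedure for a new event $e$ on $A$: (1) if $e$ is a receive with incoming message $\mu$, then for each $B$ with $\mu.\mathsf{vc}(B)>\mathsf{vc}_A(B)$ copy $\mathsf{view}_A(B,\psi)\gets\mu.\mathsf{view}(B,\psi)$ for all $\psi$ and $\mathsf{var}_A(B,x)\gets\mu.\mathsf{var}(B,x)$ for all $x$; then $\mathsf{vc}_A\gets\max(\mathsf{vc}_A,\mu.\mathsf{vc})$ pointwise. (2) For all $\psi$, $\mathsf{old}_A(\psi)\gets\mathsf{view}_A(A,\psi)$ if defined, else $0$. (3) $\mathsf{vc}_A(A)\gets\mathsf{vc}_A(A)+1$; $\sigma_A\gets\mathsf{effect}(e,\sigma_A)$ (the store after this step induces $\mathsf{val}(e)$); $\mathsf{var}_A(A,x)\gets\sigma_A(x)$ for all $x\in\mathsf{Vars}(\Phi)$. (4) Evaluate all $\psi\in\mathsf{sub}(\Phi)$ bottom-up via $\mathsf{Eval}_A$, then set $\mathsf{view}_A(A,\psi)$ to the results. (5) If $\mathsf{kind}(e)=(\mathsf{send},B)$, send to $B$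 the message (payload, $\mathsf{vc}_A$, $\mathsf{view}_A$, $\mathsf{var}_A$). Used fact (Local evaluation lemma): if before step (4) the state is coherent — i.e. $\mathsf{vc}_A(B)=|\{f\in E_B\mid f\leq_M e\}|$ for all $B$; entries for $B\neq A$ with $k=\mathsf{vc}_A(B)>0$ correctly describe $e^B_k$ and are absent when $\mathsf{vc}_A(B)=0$; $\sigma_A$ and $\mathsf{var}_A(A,\cdot)$ agree with $\mathsf{val}(e)$; $\mathsf{old}_A(\psi)$ is the truth of $\psi$ at the previous local event (false if none) — then $\mathsf{Eval}_A(\psi,e,\mathsf{old}_A)=1$ iff $M,e\models\psi$. *)

(* Defs.v *)
From HB Require Import structures.
From mathcomp Require Import all_boot.

Set Implicit Arguments.
Unset Strict Implicit.
Unset Printing Implicit Defensive.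

(* terms  t ::= x | A.x *)
Inductive term (L Var : Type) : Type :=
| TLoc of Var
| TRem of L & Var.

Inductive formula (L Var Pred : Type) : Type :=
| FAtom of Pred & seq (term L Var)
| FAt of L & formula L Var Pred
| FY of formula L Var Pred
| FS of formula L Var Pred & formula L Var Pred
| FAnd of formula L Var Pred & formula L Var Pred
| FOr of formula L Var Pred & formula L Var Pred
| FNot of formula L Var Pred.

Arguments TLoc {L Var}.
Arguments TRem {L Var}.
Arguments FAtom {L Var Pred}.
Arguments FAt {L Var Pred}.
Arguments FY {L Var Pred}.
Arguments FS {L Var Pred}.
Arguments FAnd {L Var Pred}.
Arguments FOr {L Var Pred}.
Arguments FNot {L Var Pred}.

Definition term_eqb (L Var : eqType) (t u : term L Var) : bool :=
  match t, u with
  | TLoc x, TLoc y => x == y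
  | TRem A x, TRem B y => (A == B) && (x == y)
  | _, _ => false
  end.

Lemma term_eqP (L Var : eqType) : Equality.axiom (@term_eqb L Var).
Proof.
case=> [x|A x] [y|B y] /=; try by constructor.
- by apply: (iffP eqP) => [->|[]].
- by apply: (iffP andP) => [[/eqP-> /eqP->]|[-> ->]].
Qed.

HB.instance Definition _ (L Var : eqType) :=
  hasDecEq.Build (term L Var) (@term_eqP L Var).

Fixpoint formula_eqb (L Var Pred : eqType) (f g : formula L Var Pred) : bool :=
  match f, g with
  | FAtom p ts, FAtom q us => (p == q) && (ts == us)
  | FAt A f1, FAt B g1 => (A == B) && formula_eqb f1 g1
  | FY f1, FY g1 => formula_eqb f1 g1
  | FS f1 f2, FS g1 g2 => formula_eqb f1 g1 && formula_eqb f2 g2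
  | FAnd f1 f2, FAnd g1 g2 => formula_eqb f1 g1 && formula_eqb f2 g2
  | FOr f1 f2, FOr g1 g2 => formula_eqb f1 g1 && formula_eqb f2 g2
  | FNot f1, FNot g1 => formula_eqb f1 g1
  | _, _ => false
  end.

Lemma formula_eqP (L Var Pred : eqType) : Equality.axiom (@formula_eqb L Var Pred).
Proof.
elim=> [p ts|A f IH|f IH|f1 IH1 f2 IH2|f1 IH1 f2 IH2|f1 IH1 f2 IH2|f IH]
       [q us|B g|g|g1 g2|g1 g2|g1 g2|g] /=; try by constructor.
- by apply: (iffP andP) => [[/eqP-> /eqP->]|[-> ->]].
- apply: (iffP andP) => [[/eqP-> H]|[<- <-]]; first by rewrite (elimT (IH g) H).
  by split=> //; apply/(IH f).
- by apply: (iffP (IH g)) => [->|[]].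
- apply: (iffP andP) => [[H1 H2]|[<- <-]]; first by rewrite (elimT (IH1 g1) H1) (elimT (IH2 g2) H2).
  by split; [apply/(IH1 f1)|apply/(IH2 f2)].
- apply: (iffP andP) => [[H1 H2]|[<- <-]]; first by rewrite (elimT (IH1 g1) H1) (elimT (IH2 g2) H2).
  by split; [apply/(IH1 f1)|apply/(IH2 f2)].
- apply: (iffP andP) => [[H1 H2]|[<- <-]]; first by rewrite (elimT (IH1 g1) H1) (elimT (IH2 g2) H2).
  by split; [apply/(IH1 f1)|apply/(IH2 f2)].
- by apply: (iffP (IH g)) => [->|[]].
Qed.

HB.instance Definition _ (L Var Pred : eqType) :=
  hasDecEq.Build (formula L Var Pred) (@formula_eqP L Var Pred).

Fixpoint subf (L Var Pred : Type) (f : formula L Var Pred) : seq (formula L Var Pred) :=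
  f :: match f with
       | FAtom _ _ => [::]
       | FAt _ g | FY g | FNot g => subf g
       | FS g h | FAnd g h | FOr g h => subf g ++ subf h
       end.

Definition subs (L Var Pred : Type) (Phi : seq (formula L Var Pred)) :=
  flatten (map (@subf L Var Pred) Phi).

Definition remote_var (L Var : Type) (t : term L Var) : option Var :=
  if t is TRem _ x then Some x else None.

Definition atom_vars (L Var Pred : Type) (f : formula L Var Pred) : seq Var :=
  if f is FAtom _ ts then pmap (@remote_var L Var) ts else [::].

Definition Vars (L Var Pred : Type) (Phi : seq (formula L Var Pred)) : seq Var :=
  flatten (map (@atom_vars L Var Pred) (subs Phi)).

Fixpoint osequence (T : Type) (s : seq (option T)) : option (seq T) :=
  match s with
  | [::] => Some [::]
  | Some v :: s' => omap (cons v) (osequence s')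
  | None :: _ => None
  end.

Inductive kindT (L : Type) : Type :=
| KAct | KRecv | KChoice | KSend of L.
Arguments KAct {L}. Arguments KRecv {L}. Arguments KChoice {L}.

Record msc (L : finType) (Var Val : Type) := MSC {
  ev    : finType;
  succ  : rel ev;
  msgr  : rel ev;
  kind  : ev -> kindT L;
  pid   : ev -> L;
  nu   : ev -> Var -> Val         (* nu_e: local store of pid e after e *)
}.

Section MSCDefs.
Variables (L : finType) (Var Val : Type) (M : msc L Var Val).

Local Notation E := (ev M).

Definition edge (e f : E) : bool := succ e f || msgr e f.

Definition le_M (e f : E) : bool := connect edge e f.

Definition le_loc (e f : E) : bool := connect (@succ _ _ _ M) e f.
Definition lt_loc (e f : E) : bool := le_loc e f && (e != f).

Definition succ_is_immediate_successor (A : L) : Prop :=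
  exists le : rel E,
    [/\ forall e, pid e = A -> le e e,
        forall e f, pid e = A -> pid f = A -> le e f -> le f e -> e = f,
        forall e f g, pid e = A -> pid f = A -> pid g = A ->
                      le e f -> le f g -> le e g,
        forall e f, pid e = A -> pid f = A -> le e f || le f e
      & forall e f, pid e = A -> pid f = A ->
          succ e f =
          [&& le e f, e != f &
              ~~ [exists g, [&& pid g == A, le e g, e != g, le g f & g != f]]]].

Definition msc_wf : Prop :=
  [/\
      forall e f : E, succ e f -> pid e = pid f,
      forall A, succ_is_immediate_successor A,
      forall s r : E, msgr s r ->
        [/\ kind s = KSend (pid r), kind r = KRecv & pid s <> pid r],
      forall r : E, kind r = KRecv -> (exists! s : E, msgr s r) &
      forall s r1 r2 : E, msgr s r1 -> msgr s r2 -> r1 = r2] /\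
  (forall e f, edge e f -> ~~ connect edge f e).

Definition last_loc (e : E) : option E :=
  [pick f | [&& pid f == pid e, lt_loc f e &
             [forall g, ((pid g == pid e) && lt_loc g e) ==> le_loc g f]]].

Definition last_on (B : L) (e : E) : option E :=
  [pick f | [&& pid f == B, le_M f e &
             [forall g, ((pid g == B) && le_M g e) ==> le_loc g f]]].

(* f is e^B_k, the k-th event (from 1) of lifeline B *)
Definition kth_event (B : L) (k : nat) (f : E) : bool :=
  (pid f == B) && (#|[pred g | (pid g == B) && le_loc g f]| == k).

Definition lin_ext (lin : seq E) : Prop :=
  [/\ uniq lin, forall e, e \in lin
    & forall e f, le_M e f -> index e lin <= index f lin].

End MSCDefs.

Section CPLSem.
Variables (L : finType) (Var Pred : eqType) (Val : Type).
Variable interp : Pred -> seq Val -> bool.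
Variable M : msc L Var Val.
Local Notation E := (ev M).

Definition term_val (e : E) (t : term L Var) : option Val :=
  match t with
  | TLoc x => Some (nu e x)
  | TRem B x => omap (fun f => nu f x) (last_on B e)
  end.

Fixpoint sat (phi : formula L Var Pred) (e : E) : Prop :=
  match phi with
  | FAtom p ts =>
      match osequence (map (term_val e) ts) with
      | Some vs => interp p vs
      | None => False
      end
  | FAt B psi => exists f, last_on B e = Some f /\ sat psi f
  | FY psi => exists f, last_loc e = Some f /\ sat psi f
  | FS psi1 psi2 =>
      exists f, [/\ pid f = pid e, le_loc f e, sat psi2 f &
                    forall g, pid g = pid e -> lt_loc f g -> le_loc g e -> sat psi1 g]
  | FAnd psi1 psi2 => sat psi1 e /\ sat psi2 e
  | FOr psi1 psi2 => sat psi1 e \/ sat psi2 e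
  | FNot psi => ~ sat psi e
  end.

End CPLSem.

Section Monitor.
Variables (L : finType) (Var Pred : eqType) (Val : Type).
Variable interp : Pred -> seq Val -> bool.
Variable Phi : seq (formula L Var Pred).
Variable M : msc L Var Val.
Variable sigma0 : L -> Var -> Val.
Variable effect : ev M -> (Var -> Val) -> (Var -> Val).
Local Notation E := (ev M).
Local Notation fml := (formula L Var Pred).

Record mstate := MState {
  vc    : L -> nat;
  view  : L -> fml -> option bool;
  vars  : L -> Var -> option Val;
  sigma : Var -> Val;
  old   : fml -> bool
}.

Record message := Msg {
  mvc   : L -> nat;
  mview : L -> fml -> option bool;
  mvar  : L -> Var -> option Val
}.

Definition init_state (A : L) : mstate :=
  MState (fun _ => 0) (fun _ _ => None) (fun _ _ => None) (sigma0 A) (fun _ => false).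

Definition mterm (st : mstate) (t : term L Var) : option Val :=
  match t with
  | TLoc x => Some (sigma st x)
  | TRem B x => vars st B x
  end.

Fixpoint meval (A : L) (st : mstate) (psi : fml) : bool :=
  match psi with
  | FAtom p ts =>
      match osequence (map (mterm st) ts) with
      | Some vs => interp p vs
      | None => false
      end
  | FY th => (1 < vc st A) && old st th
  | FAt B th =>
      if B == A then meval A st th
      else if vc st B == 0 then false else odflt false (view st B th)
  | FS th1 th2 =>
      meval A st th2 || [&& meval A st th1, 1 < vc st A & old st psi]
  | FAnd th1 th2 => meval A st th1 && meval A st th2
  | FOr th1 th2 => meval A st th1 || meval A st th2
  | FNot th => ~~ meval A st th
  end.

(* step (1): merge an incoming message *)
Definition recv_merge (st : mstate) (mu : message) : mstate :=
  MState (fun B => maxn (vc st B) (mvc mu B))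
         (fun B => if vc st B < mvc mu B then mview mu B else view st B)
         (fun B => if vc st B < mvc mu B then mvar mu B else vars st B)
         (sigma st) (old st).

(* step (2) *)
Definition set_old (A : L) (st : mstate) : mstate :=
  MState (vc st) (view st) (vars st) (sigma st)
         (fun psi => odflt false (view st A psi)).

(* step (3) *)
Definition local_update (A : L) (e : E) (st : mstate) : mstate :=
  let s' := effect e (sigma st) in
  MState (fun B => if B == A then (vc st B).+1 else vc st B)
         (view st)
         (fun B x => if (B == A) && (x \in Vars Phi) then Some (s' x) else vars st B x)
         s' (old st).

(* step (4) *)
Definition eval_update (A : L) (st : mstate) : mstate :=
  MState (vc st)
         (fun B psi => if (B == A) && (psi \in subs Phi)
                       then Some (meval A st psi) else view st B psi)
         (vars st) (sigma st) (old st).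

Record config := Config {
  states : L -> mstate;
  sent   : E -> option message
}.

Definition init_config : config := Config init_state (fun _ => None).

Definition process (c : config) (e : E) : config :=
  let A := pid e in
  let st0 := states c A in
  let st1 :=
    if kind e is KRecv then
      match [pick s | msgr s e] with
      | Some s => if sent c s is Some mu then recv_merge st0 mu else st0
      | None => st0
      end
    else st0 in
  let st4 := eval_update A (local_update A e (set_old A st1)) in
  Config (fun B => if B == A then st4 else states c B)
         (fun s => if (s == e) && (if kind e is KSend _ then true else false)
                   then Some (Msg (vc st4) (view st4) (vars st4))
                   else sent c s).

Definition run (s : seq E) : config := foldl process init_config s.

End Monitor.

Definition val_induced (L : finType) (Var Val : Type) (M : msc L Var Val)
  (sigma0 : L -> Var -> Val) (effect : ev M -> (Var -> Val) -> (Var -> Val)) : Prop :=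
  forall e : ev M,
    nu e = effect e (if last_loc e is Some f then nu f else sigma0 (pid e)).

(* Main.v *)
Require Import Defs.
From mathcomp Require Import all_boot zify.
Set Implicit Arguments. Unset Strict Implicit. Unset Printing Implicit Defensive.

Section Order.
Variables (L : finType) (Var Val : Type) (M : msc L Var Val).
Hypothesis wf : msc_wf M.
Local Notation E := (ev M).

Lemma succ_pid (e f : E) : succ e f -> pid e = pid f.
Proof. by case: wf => [[H _ _ _ _] _]; apply: H. Qed.

Lemma le_loc_pid (e f : E) : le_loc e f -> pid e = pid f.
Proof.
case/connectP=> p; elim: p e => [|x p IH] e /=; first by move=> _ ->.
by case/andP=> /succ_pid -> /IH H /H.
Qed.

Lemma le_loc_M (e f : E) : le_loc e f -> le_M e f.
Proof.
apply: connect_sub => x y H; apply: connect1; by rewrite /edge H.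
Qed.

Lemma le_M_antisym (e f : E) : le_M e f -> le_M f e -> e = f.
Proof.
case/connectP=> [[|x p]] /=; first by move=> _ ->.
case/andP=> exe Hp Hl Hfe.
have Hxf : connect (@edge _ _ _ M) x f by apply/connectP; exists p.
have := wf.2 _ _ exe; rewrite (connect_trans Hxf Hfe) //.
Qed.

Lemma le_loc_antisym (e f : E) : le_loc e f -> le_loc f e -> e = f.
Proof. by move=> /le_loc_M H1 /le_loc_M H2; apply: le_M_antisym. Qed.

Lemma le_loc_refl (e : E) : le_loc e e.
Proof. exact: connect0. Qed.

Lemma le_loc_trans (e f g : E) : le_loc e f -> le_loc f g -> le_loc e g.
Proof. exact: connect_trans. Qed.

Lemma le_M_trans (e f g : E) : le_M e f -> le_M f g -> le_M e g.
Proof. exact: connect_trans. Qed.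

Lemma le_connect A (le : rel E) :
  [/\ forall e, pid e = A -> le e e,
        forall e f, pid e = A -> pid f = A -> le e f -> le f e -> e = f,
        forall e f g, pid e = A -> pid f = A -> pid g = A ->
                      le e f -> le f g -> le e g,
        forall e f, pid e = A -> pid f = A -> le e f || le f e
      & forall e f, pid e = A -> pid f = A ->
          succ e f =
          [&& le e f, e != f &
              ~~ [exists g, [&& pid g == A, le e g, e != g, le g f & g != f]]]] ->
  forall e f, pid e = A -> pid f = A -> le e f -> le_loc e f.
Proof.
case=> refl anti trans tot succE.
suff H : forall n e f, #|[pred g | [&& pid g == A, le e g & le g f]]| <= n ->
   pid e = A -> pid f = A -> le e f -> le_loc e f.
  by move=> e f; apply: H.
elim=> [|n IH] e f Hn Pe Pf lef.
  have : 0 < #|[pred g | [&& pid g == A, le e g & le g f]]|.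
    by apply/card_gt0P; exists e; rewrite inE Pe eqxx refl.
  by rewrite leqn0 in Hn; rewrite (eqP Hn).
case: (eqVneq e f) => [->|neef]; first exact: le_loc_refl.
case Hs: (succ e f); first exact: connect1.
move: Hs; rewrite succE // lef neef /= => /negbFE/existsP[g /and5P[/eqP Pg leg neg lgf ngf]].
have sub1 : forall x y, le e x -> le y f -> pid x = A -> pid y = A ->
   (x != e) || (y != f) -> le x y ->
   #|[pred h | [&& pid h == A, le x h & le h y]]| <= n.
  move=> x y lex lyf Px Py ne lxy.
  rewrite -ltnS; apply: leq_trans Hn; apply: proper_card; apply/properP; split.
    apply/subsetP=> h; rewrite !inE => /and3P[/eqP Ph lxh lhy] /=.
    rewrite Ph eqxx /=; apply/andP; split.
      exact: (trans e x h).
    exact: (trans h y f).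
  case/orP: ne => ne.
    exists e; first by rewrite inE Pe eqxx (refl e Pe) lef.
    rewrite inE Pe eqxx /=; apply/negP => /andP[lxe _].
    by move/eqP: ne; apply; apply: anti.
  exists f; first by rewrite inE Pf eqxx (refl f Pf) lef.
  rewrite inE Pf eqxx /=; apply/negP => /andP[_ lfy].
  by move/eqP: ne; apply; apply: anti.
apply: (le_loc_trans (f := g)).
  apply: (IH e g) => //; apply: sub1 => //; first exact: refl.
  by rewrite ngf orbT.
apply: (IH g f) => //; apply: sub1 => //; first exact: refl.
by rewrite eq_sym neg.
Qed.

Lemma le_loc_total (e f : E) : pid e = pid f -> le_loc e f || le_loc f e.
Proof.
move=> Pef; case: wf => [[_ H _ _ _] _].
case: (H (pid e)) => le Hle.
have := Hle; case => _ _ _ tot _.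
case/orP: (tot e f erefl (esym Pef)) => H1.
  by rewrite (le_connect Hle erefl (esym Pef) H1).
by rewrite (le_connect Hle (esym Pef) erefl H1) orbT.
Qed.

Lemma le_M_loc (e f : E) : pid e = pid f -> le_M e f -> le_loc e f.
Proof.
move=> Pef lef; case/orP: (le_loc_total Pef) => // lfe.
by rewrite (le_M_antisym lef (le_loc_M lfe)) le_loc_refl.
Qed.

End Order.

Section Count.
Variables (L : finType) (Var Val : Type) (M : msc L Var Val).
Hypothesis wf : msc_wf M.
Local Notation E := (ev M).

Definition cnt (B : L) (f : E) := #|[pred g | (pid g == B) && le_loc g f]|.

Lemma cnt_lt B (f g : E) : pid f = B -> pid g = B -> le_loc f g -> f != g ->
  cnt B f < cnt B g.
Proof.
move=> Pf Pg lfg nfg; apply: proper_card; apply/properP; split.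
  apply/subsetP=> h; rewrite !inE => /andP[-> lhf] /=; exact: le_loc_trans lhf lfg.
exists g; first by rewrite inE Pg eqxx le_loc_refl.
rewrite inE Pg eqxx /=; apply/negP => lgf.
by move/eqP: nfg; apply; apply: (le_loc_antisym wf).
Qed.

Lemma kth_uniq B k (f f' : E) : kth_event B k f -> kth_event B k f' -> f = f'.
Proof.
rewrite /kth_event => /andP[/eqP Pf /eqP Cf] /andP[/eqP Pf' /eqP Cf'].
case: (eqVneq f f') => // nff.
have : pid f = pid f' by rewrite Pf Pf'.
move/(le_loc_total wf)/orP => [H|H].
  by have := cnt_lt Pf Pf' H nff; rewrite /cnt Cf Cf' ltnn.
by have := cnt_lt Pf' Pf H (contra_neq esym nff) ; rewrite /cnt Cf Cf' ltnn.
Qed.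

Definition ldown B (T : pred E) :=
  (forall f, T f -> pid f = B) /\ (forall f g, T f -> pid g = B -> le_loc g f -> T g).

Lemma max_kth B (T : pred E) : ldown B T ->
  forall p, T p -> (forall g, T g -> le_loc g p) -> kth_event B #|T| p.
Proof.
case=> HP HD p Tp Hmax; rewrite /kth_event (HP _ Tp) eqxx /=.
apply/eqP; apply: eq_card => g; rewrite !inE.
apply/andP/idP => [[/eqP Pg lgp]|Tg]; first exact: HD Tp Pg lgp.
by rewrite (HP _ Tg) eqxx Hmax.
Qed.

Lemma max_exists B (T : pred E) : ldown B T -> 0 < #|T| ->
  exists p, T p /\ (forall g, T g -> le_loc g p).
Proof.
case=> HP HD /card_gt0P[p0 Tp0].
case: (arg_maxnP (cnt B) (Tp0 : T p0)) => p Tp Hm.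
exists p; split => // g Tg.
have : pid g = pid p by rewrite !HP.
move/(le_loc_total wf)/orP => [//|lpg].
case: (eqVneq p g) => [->|npg]; first exact: le_loc_refl.
have Hlt := cnt_lt (HP _ Tp) (HP _ Tg) lpg npg.
have H2 : cnt B g <= cnt B p := Hm g Tg.
by rewrite leqNgt Hlt in H2.
Qed.

Lemma ldown_sub B (T1 T2 : pred E) : ldown B T1 -> ldown B T2 ->
  (forall f, T1 f -> T2 f) \/ (forall f, T2 f -> T1 f).
Proof.
case=> HP1 HD1 [HP2 HD2].
case: (boolP [exists f, T1 f && ~~ T2 f]) => [/existsP[f /andP[T1f nT2f]]|/existsPn H].
  right => g T2g.
  have : pid g = pid f by rewrite (HP1 _ T1f) (HP2 _ T2g).
  move/(le_loc_total wf)/orP => [lgf|lfg]; first exact: HD1 T1f (HP2 _ T2g) lgf.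
  by rewrite (HD2 _ _ T2g (HP1 _ T1f) lfg) in nT2f.
left => f T1f; by move: (H f); rewrite T1f /= negbK.
Qed.

Lemma card_union_max B (T1 T2 : pred E) : ldown B T1 -> ldown B T2 ->
  #|[pred f | T1 f || T2 f]| = maxn #|T1| #|T2|.
Proof.
move=> H1 H2; case: (ldown_sub H1 H2) => H.
  have -> : #|[pred f | T1 f || T2 f]| = #|T2|.
    by apply: eq_card => f; rewrite inE unfold_in; apply/orP/idP => [[/H|]|] //; right.
  apply/esym/maxn_idPr; apply: subset_leq_card; apply/subsetP => f; exact: H.
have -> : #|[pred f | T1 f || T2 f]| = #|T1|.
  by apply: eq_card => f; rewrite inE unfold_in; apply/orP/idP => [[|/H]|] //; left.
apply/esym/maxn_idPl; apply: subset_leq_card; apply/subsetP => f; exact: H.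
Qed.

Definition downclosed (D : pred E) := forall f g, D f -> le_M g f -> D g.

Lemma ldown_D B (D : pred E) : downclosed D -> ldown B [pred f | (pid f == B) && D f].
Proof.
move=> HD; split => [f /andP[/eqP //]|f g /andP[_ Df] Pg lgf].
by rewrite inE Pg eqxx (HD _ _ Df (le_loc_M lgf)).
Qed.

End Count.

Section Sem.
Variables (L : finType) (Var Pred : eqType) (Val : Type).
Variable interp : Pred -> seq Val -> bool.
Variable M : msc L Var Val.
Hypothesis wf : msc_wf M.
Local Notation E := (ev M).

Definition Tof B (e : E) : pred E := fun f => (pid f == B) && le_M f e.

Lemma ldown_T B (e : E) : ldown B (Tof B e).
Proof.
apply: ldown_D => f g H1 H2; exact: le_M_trans H2 H1.
Qed.

Lemma last_on_cases B (e : E) :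
  (#|Tof B e| = 0 /\ last_on B e = None) \/
  (exists p, [/\ 0 < #|Tof B e|, kth_event B #|Tof B e| p & last_on B e = Some p]).
Proof.
rewrite /last_on; case: pickP => [f /and3P[Pf lfe /forallP Hf]|Hn].
  right; exists f.
  have Tf : Tof B e f by rewrite /Tof Pf lfe.
  have Hk : kth_event B #|Tof B e| f.
    apply: (max_kth (ldown_T B e)) => // g /andP[Pg lge].
    by have := Hf g; rewrite Pg lge.
  split => //; apply/card_gt0P; exists f; exact: Tf.
case: (posnP #|Tof B e|) => [->|H]; first by left.
right; exfalso.
case: (max_exists wf (ldown_T B e) H) => p [/andP[Pp lpe] Hm].
move: (Hn p); rewrite Pp lpe /=; move/negbT/negP; apply.
by apply/forallP => g; apply/implyP => /andP[Pg lge]; apply: Hm; rewrite /Tof Pg lge.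
Qed.

Lemma last_on_self (e : E) : last_on (pid e) e = Some e.
Proof.
case: (last_on_cases (pid e) e) => [[H _]|[p [_ Hk ->]]].
  by move/card0_eq: H => /(_ e); rewrite unfold_in /= eqxx /le_M connect0.
congr Some; apply: (kth_uniq wf Hk).
apply: (max_kth (ldown_T _ e)); first by rewrite /Tof eqxx /le_M connect0.
move=> g /andP[/eqP Pg lge]; exact: (le_M_loc wf Pg lge).
Qed.

Definition Sof (e : E) : pred E := fun f => (pid f == pid e) && lt_loc f e.

Lemma ldown_S (e : E) : ldown (pid e) (Sof e).
Proof.
split => [f /andP[/eqP //]|f g /andP[_ /andP[lfe nfe]] Pg lgf].
rewrite /Sof Pg eqxx /lt_loc (le_loc_trans lgf lfe) /=.
apply/negP => /eqP Hge; subst g.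
by move/eqP: nfe; apply; apply: (le_loc_antisym wf).
Qed.

Lemma last_loc_spec (e p : E) : last_loc e = Some p ->
  [/\ pid p = pid e, lt_loc p e & forall g, pid g = pid e -> lt_loc g e -> le_loc g p].
Proof.
rewrite /last_loc; case: pickP => // f /and3P[/eqP Pf lfe /forallP Hf] [<-].
split => // g Pg lge; by have := Hf g; rewrite Pg eqxx lge.
Qed.

Lemma last_loc_cases (e : E) :
  (#|Sof e| = 0 /\ last_loc e = None) \/
  (exists p, [/\ 0 < #|Sof e|, kth_event (pid e) #|Sof e| p & last_loc e = Some p]).
Proof.
case E1: (last_loc e) => [p|].
  case: (last_loc_spec E1) => Pp lpe Hm; right; exists p.
  have Sp : Sof e p by rewrite /Sof Pp eqxx lpe.
  split => //; first by apply/card_gt0P; exists p.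
  apply: (max_kth (ldown_S e)) => // g /andP[/eqP Pg lge]; exact: Hm.
case: (posnP #|Sof e|) => [->|H]; first by left.
exfalso; case: (max_exists wf (ldown_S e) H) => p [/andP[Pp lpe] Hm].
move: E1; rewrite /last_loc; case: pickP => // Hn _.
move: (Hn p); rewrite Pp lpe /=; move/negbT/negP; apply.
by apply/forallP => g; apply/implyP => /andP[Pg lge]; apply: Hm; rewrite /Sof Pg lge.
Qed.

Lemma sat_S (a b : formula L Var Pred) (e : E) :
  sat interp (FS a b) e <->
  sat interp b e \/ (sat interp a e /\ exists p, last_loc e = Some p /\ sat interp (FS a b) p).
Proof.
split.
  case=> f [Pf lfe Sb Ha].
  case: (eqVneq f e) => [Hfe|nfe]; first by left; rewrite -Hfe.
  right.
  have Sf : Sof e f by rewrite /Sof Pf eqxx /lt_loc lfe nfe.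
  case: (last_loc_cases e) => [[H _]|[p [_ _ Hp]]].
    by move: Sf; rewrite /Sof => Sf; move/card0_eq: H => /(_ f); rewrite unfold_in Sf.
  case: (last_loc_spec Hp) => Pp lpe Hm.
  split.
    by apply: Ha => //; rewrite ?le_loc_refl // /lt_loc lfe nfe.
  exists p; split => //; exists f; split => //; first by rewrite Pf.
    by apply: Hm; rewrite // /lt_loc lfe nfe.
  move=> g Pg lfg lgp; apply: Ha => //; first by rewrite Pg.
  exact: le_loc_trans lgp (proj1 (andP lpe)).
case=> [Sb|[Sa [p [Hp [f [Pf lfp Sbf Ha]]]]]].
  exists e; split => //; first exact: le_loc_refl.
  move=> g _ /andP[leg neg] lge; exfalso.
  by move/eqP: neg; apply; apply: (le_loc_antisym wf).
case: (last_loc_spec Hp) => Pp /andP[lpe npe] Hm.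
exists f; split => //; first by rewrite Pf.
  exact: le_loc_trans lfp lpe.
move=> g Pg lfg lge.
case: (eqVneq g e) => [->//|nge].
apply: Ha; rewrite ?Pg //; apply: Hm => //; by rewrite /lt_loc lge nge.
Qed.

End Sem.

Section Mon.
Variables (L : finType) (Var Pred : eqType) (Val : Type).
Variable interp : Pred -> seq Val -> bool.
Variable Phi : seq (formula L Var Pred).
Variable M : msc L Var Val.
Variable sigma0 : L -> Var -> Val.
Variable effect : ev M -> (Var -> Val) -> (Var -> Val).
Hypothesis wf : msc_wf M.
Hypothesis valind : val_induced sigma0 effect.
Local Notation E := (ev M).
Local Notation fml := (formula L Var Pred).

Definition goodv (vcf : L -> nat) (viewf : L -> fml -> option bool)
  (varsf : L -> Var -> option Val) (D : pred E) : Prop :=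
  forall B : L,
  [/\ vcf B = #|[pred f | (pid f == B) && D f]|,
      vcf B = 0 ->
        (forall x, varsf B x = None) /\ (forall psi, viewf B psi = None),
      forall (k : nat) (f : E), vcf B = k -> 0 < k -> kth_event B k f ->
        forall x, x \in Vars Phi -> varsf B x = Some (nu f x)
    & forall (k : nat) (f : E), vcf B = k -> 0 < k -> kth_event B k f ->
        forall psi, psi \in subs Phi ->
          exists b : bool, viewf B psi = Some b /\ (b = true <-> sat interp psi f)].

Lemma merge_good (st : mstate L Var Pred Val) (mu : message L Var Pred Val) (D1 D2 : pred E) :
  downclosed D1 -> downclosed D2 ->
  goodv (vc st) (view st) (vars st) D1 -> goodv (mvc mu) (mview mu) (mvar mu) D2 ->
  goodv (vc (recv_merge st mu)) (view (recv_merge st mu)) (vars (recv_merge st mu))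
        (fun f => D1 f || D2 f).
Proof.
move=> d1 d2 G1 G2 B; case: (G1 B) => c1 z1 v1 w1; case: (G2 B) => c2 z2 v2 w2 /=.
split.
- rewrite c1 c2 -(card_union_max wf (ldown_D B d1) (ldown_D B d2)).
  by apply: eq_card => f; rewrite !inE; case: (pid f == B).
- move=> H0; have h1 : vc st B = 0 by lia.
  have h2 : mvc mu B = 0 by lia.
  rewrite h1 h2 /=; exact: z1.
- move=> k f Hk kpos kth x xin; case: ltnP => H.
    apply: (v2 k) => //; by rewrite -Hk; apply/esym/maxn_idPr/ltnW.
  apply: (v1 k) => //; by rewrite -Hk; apply/esym/maxn_idPl.
- move=> k f Hk kpos kth x xin; case: ltnP => H.
    apply: (w2 k) => //; by rewrite -Hk; apply/esym/maxn_idPr/ltnW.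
  apply: (w1 k) => //; by rewrite -Hk; apply/esym/maxn_idPl.
Qed.

Lemma subf_self (psi : fml) : psi \in subf psi.
Proof. by case: psi => * /=; rewrite inE eqxx. Qed.

Lemma remote_in_Vars p ts B x :
  FAtom p ts \in subs Phi -> TRem B x \in ts -> x \in Vars Phi.
Proof.
move=> Hin Hx; apply/flatten_mapP; exists (FAtom p ts) => //.
by rewrite /atom_vars mem_pmap; apply/mapP; exists (TRem B x).
Qed.

Lemma subf_trans (phi psi th : fml) : psi \in subf phi -> th \in subf psi -> th \in subf phi.
Proof.
elim: phi => [p ts|B a IH|a IH|a IHa b IHb|a IHa b IHb|a IHa b IHb|a IH] /=.
- by rewrite inE => /eqP ->.
- by rewrite inE => /orP[/eqP ->|H] // Hth; rewrite inE (IH H Hth) orbT.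
- by rewrite inE => /orP[/eqP ->|H] // Hth; rewrite inE (IH H Hth) orbT.
- rewrite inE mem_cat => /orP[/eqP ->|H] // Hth.
  by rewrite inE mem_cat; case/orP: H => H; rewrite ?(IHa H Hth) ?(IHb H Hth) ?orbT.
- rewrite inE mem_cat => /orP[/eqP ->|H] // Hth.
  by rewrite inE mem_cat; case/orP: H => H; rewrite ?(IHa H Hth) ?(IHb H Hth) ?orbT.
- rewrite inE mem_cat => /orP[/eqP ->|H] // Hth.
  by rewrite inE mem_cat; case/orP: H => H; rewrite ?(IHa H Hth) ?(IHb H Hth) ?orbT.
- by rewrite inE => /orP[/eqP ->|H] // Hth; rewrite inE (IH H Hth) orbT.
Qed.

Lemma subs_closed (psi th : fml) : psi \in subs Phi -> th \in subf psi -> th \in subs Phi.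
Proof.
move=> /flatten_mapP[phi phin psin] thin; apply/flatten_mapP; exists phi => //.
exact: subf_trans psin thin.
Qed.

Section Eval.
Variables (e : E) (st1 : mstate L Var Pred Val) (D1 : pred E).
Hypothesis G1 : goodv (vc st1) (view st1) (vars st1) D1.
Hypothesis HD : forall f, le_M f e = D1 f || (f == e).
Hypothesis HnD : ~~ D1 e.
Hypothesis Hsig : sigma st1 = (if last_loc e is Some p then nu p else sigma0 (pid e)).

Let A := pid e.
Let st := local_update Phi effect A e (set_old A st1).

Lemma F_sigma : sigma st = nu e.
Proof. by rewrite /st /= Hsig -valind. Qed.

Lemma F2 : vc st1 A = #|Sof e|.
Proof.
case: (G1 A) => -> _ _ _; apply: eq_card => f; rewrite !inE unfold_in /Sof.
case: (eqVneq (pid f) A) => [Pf|] //=.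
apply/idP/idP => [Df|/andP[lfe nfe]].
  have nfe : f != e by apply: contraNneq HnD => <-.
  rewrite /lt_loc nfe andbT; apply: (le_M_loc wf Pf); by rewrite HD Df.
by move: (le_loc_M lfe); rewrite HD (negbTE nfe) orbF.
Qed.

Lemma F3 B : B != A -> vc st1 B = #|Tof B e|.
Proof.
move=> nBA; case: (G1 B) => -> _ _ _; apply: eq_card => f; rewrite !inE unfold_in /Tof HD.
case: (eqVneq (pid f) B) => [Pf|] //=.
case: (eqVneq f e) => [Hfe|]; last by rewrite orbF.
by move: nBA; rewrite -Pf Hfe eqxx.
Qed.

Lemma F_old th : th \in subs Phi ->
  (old st th = true <-> exists p, last_loc e = Some p /\ sat interp th p).
Proof.
move=> thin; rewrite /st /=.
case: (last_loc_cases wf e) => [[H0 ->]|[p [pos kth ->]]].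
  case: (G1 A) => _ z _ _; rewrite (proj2 (z _)) /=; last by rewrite F2 H0.
  by split => // [[p []]].
case: (G1 A) => _ _ _ w.
case: (w _ p (F2) (pos) kth th thin) => b [-> Hb] /=.
split => [Hb1|[q [[<-] Hq]]]; first by exists p; split => //; apply/Hb.
exact/Hb.
Qed.

Lemma F_Y : (1 < vc st A) <-> exists p, last_loc e = Some p.
Proof.
rewrite /st /= eqxx ltnS F2.
case: (last_loc_cases wf e) => [[-> ->]|[p [pos _ ->]]]; last by split => //; exists p.
by split => // [[p]].
Qed.

Lemma F_vars B x : vars st B x = if (B == A) && (x \in Vars Phi) then Some (nu e x) else vars st1 B x.
Proof. by rewrite /st /= Hsig -valind. Qed.

Lemma F_vc B : vc st B = if B == A then (vc st1 B).+1 else vc st1 B.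
Proof. by []. Qed.

Lemma F_view : view st = view st1.
Proof. by []. Qed.

Lemma meval_ok psi : (forall th, th \in subf psi -> th \in subs Phi) ->
  (meval interp A st psi = true <-> sat interp psi e).
Proof.
have Fs := F_sigma; have Fv := F_vars; have Fc := F_vc; have Fw := F_view.
have Fo := F_old; have Fy := F_Y.
clearbody st.
elim: psi => [p ts|B th IH|th IH|a IHa b IHb|a IHa b IHb|a IHa b IHb|th IH] Hsub.
- have Hin := Hsub _ (subf_self (FAtom p ts)).
  rewrite /=.
  have -> : map (mterm st) ts = map (term_val e) ts.
    apply/eq_in_map => t tin; case: t tin => [x|B x] tin /=.
      by rewrite Fs.
    have xin := remote_in_Vars Hin tin.
    rewrite Fv xin andbT.
    case: (eqVneq B A) => [->|nBA].
      by rewrite /A last_on_self.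
    case: (G1 B) => _ z v _.
    case: (last_on_cases wf B e) => [[H0 ->]|[q [pos kth ->]]] /=.
      by rewrite (proj1 (z _)) // F3.
    exact: (v _ q (F3 nBA)).
  by case: (osequence _).
- have Hs : forall t, t \in subf th -> t \in subs Phi.
    by move=> t tin; apply: Hsub; rewrite /= inE tin orbT.
  rewrite /=; case: (eqVneq B A) => [->|nBA].
    rewrite /A last_on_self //; split => [/(IH Hs) H|[f [[<-] /(IH Hs)]] //].
    by exists e.
  rewrite Fc Fw (negbTE nBA).
  case: (G1 B) => _ z _ w.
  case: (last_on_cases wf B e) => [[H0 ->]|[q [pos kth ->]]] /=.
    by rewrite F3 // H0 /=; split => // [[f []]].
  rewrite F3 // (negbTE (lt0n_neq0 pos)) /=.
  have thin := Hsub th ltac:(by rewrite /= inE subf_self orbT).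
  case: (w _ q (F3 nBA) pos kth th thin) => c [-> Hc] /=.
  split => [Hc1|[f [[<-] Hf]]]; first by exists q; split => //; apply/Hc.
  exact/Hc.
- have thin := Hsub th ltac:(by rewrite /= inE subf_self orbT).
  rewrite /=; split => [/andP[_ /(Fo _ thin) H] //|H].
  rewrite (proj2 (Fo _ thin) H) andbT; apply/Fy.
  by case: H => p [Hp _]; exists p.
- have Hsa : forall t, t \in subf a -> t \in subs Phi.
    by move=> t tin; apply: Hsub; rewrite /= inE mem_cat tin orbT.
  have Hsb : forall t, t \in subf b -> t \in subs Phi.
    by move=> t tin; apply: Hsub; rewrite /= inE mem_cat tin !orbT.
  have Hin := Hsub _ (subf_self (FS a b)).
  rewrite sat_S //.
  have -> : meval interp A st (FS a b) =
     meval interp A st b || [&& meval interp A st a, 1 < vc st A & old st (FS a b)] by [].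
  split.
    case/orP => [/(IHb Hsb) H|/and3P[/(IHa Hsa) H1 H2 /(F_old Hin) H3]]; first by left.
    by right.
  case=> [/(IHb Hsb) ->//|[/(IHa Hsa) H1 H3]].
  have H2 : 1 < vc st A by apply/Fy; case: H3 => p [Hp _]; exists p.
  by rewrite H1 H2 (proj2 (Fo _ Hin) H3) orbT.
- have Hsa : forall t, t \in subf a -> t \in subs Phi.
    by move=> t tin; apply: Hsub; rewrite /= inE mem_cat tin orbT.
  have Hsb : forall t, t \in subf b -> t \in subs Phi.
    by move=> t tin; apply: Hsub; rewrite /= inE mem_cat tin !orbT.
  rewrite /= -(IHa Hsa) -(IHb Hsb); by split => [/andP[-> ->]|[-> ->]].
- have Hsa : forall t, t \in subf a -> t \in subs Phi.
    by move=> t tin; apply: Hsub; rewrite /= inE mem_cat tin orbT.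
  have Hsb : forall t, t \in subf b -> t \in subs Phi.
    by move=> t tin; apply: Hsub; rewrite /= inE mem_cat tin !orbT.
  rewrite /= -(IHa Hsa) -(IHb Hsb); by split => /orP.
- have Hs : forall t, t \in subf th -> t \in subs Phi.
    by move=> t tin; apply: Hsub; rewrite /= inE tin orbT.
  rewrite /= -(IH Hs); split => [/negP H|H]; first by [].
  by apply/negP.
Qed.

Lemma card_Tof_self : #|Tof A e| = #|Sof e|.+1.
Proof.
rewrite (cardD1 e) unfold_in /Tof /A eqxx /le_M connect0 /= add1n.
congr S; apply: eq_card => f; rewrite !inE !unfold_in /Sof /=.
case: (eqVneq f e) => [->|nfe] /=; first by rewrite /lt_loc !eqxx /= andbF.
rewrite /lt_loc nfe andbT; case: (eqVneq (pid f) (pid e)) => [Pf|] //=.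
apply/idP/idP; [exact: (le_M_loc wf Pf) | exact: le_loc_M].
Qed.

Lemma step_good :
  goodv (vc (eval_update interp Phi A st)) (view (eval_update interp Phi A st))
        (vars (eval_update interp Phi A st)) (fun f => le_M f e)
  /\ sigma (eval_update interp Phi A st) = nu e.
Proof.
have Fs := F_sigma; have Fv := F_vars; have Fc := F_vc; have Fw := F_view.
have Fm := meval_ok.
have F2' := F2.
have F3' := F3.
clearbody st.
rewrite /=.
split => // B.
have TE : forall C, #|[pred f | (pid f == C) && le_M f e]| = #|Tof C e|.
  by move=> C; apply: eq_card => f; rewrite inE.
rewrite TE.
case: (eqVneq B A) => [->|nBA].
  have ekth : kth_event A #|Tof A e| e.
    apply: (max_kth (ldown_T A e)); first by rewrite /Tof eqxx /le_M connect0.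
    move=> g /andP[/eqP Pg lge]; exact: (le_M_loc wf Pg lge).
  split.
  - by rewrite Fc eqxx F2' card_Tof_self.
  - by rewrite Fc eqxx.
  - move=> k f Hk kpos kth x xin.
    rewrite Fc eqxx F2' in Hk.
    have Hk' : k = #|Tof A e|.
      by rewrite -Hk card_Tof_self.
    rewrite Hk' in kth; rewrite -(kth_uniq wf ekth kth).
    by rewrite Fv eqxx xin.
  - move=> k f Hk kpos kth psi psin.
    rewrite Fc eqxx F2' in Hk.
    have Hk' : k = #|Tof A e|.
      by rewrite -Hk card_Tof_self.
    rewrite Hk' in kth; rewrite -(kth_uniq wf ekth kth).
    rewrite psin /=; exists (meval interp A st psi); split => //.
    apply: Fm => th thin; exact: subs_closed psin thin.
case: (G1 B) => c z v w.
split.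
- by rewrite Fc (negbTE nBA) F3'.
- rewrite Fc (negbTE nBA) => H0; case: (z H0) => z1 z2; split => [x|psi].
    by rewrite Fv (negbTE nBA) z1.
  by rewrite /= Fw z2.
- move=> k f; rewrite Fc (negbTE nBA) => Hk kpos kth x xin.
  by rewrite Fv (negbTE nBA); apply: (v k).
- move=> k f; rewrite Fc (negbTE nBA) => Hk kpos kth psi psin.
  by rewrite /= Fw; apply: (w k).
Qed.

End Eval.

End Mon.

Section Run.
Variables (L : finType) (Var Pred : eqType) (Val : Type).
Variable interp : Pred -> seq Val -> bool.
Variable Phi : seq (formula L Var Pred).
Variable M : msc L Var Val.
Variable sigma0 : L -> Var -> Val.
Variable effect : ev M -> (Var -> Val) -> (Var -> Val).
Hypothesis wf : msc_wf M.
Hypothesis valind : val_induced sigma0 effect.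
Variables (lin : seq (ev M)) (x0 : ev M).
Hypothesis Hlin : lin_ext lin.
Local Notation E := (ev M).
Local Notation good := (goodv interp Phi).
Local Notation cfg n := (run interp Phi sigma0 effect (take n lin)).

Definition DA n A : pred E := fun f => [exists g, [&& index g lin < n, pid g == A & le_M f g]].

Definition Inv n : Prop :=
  [/\ forall A, good (vc (states (cfg n) A)) (view (states (cfg n) A)) (vars (states (cfg n) A)) (DA n A),
      forall A, (vc (states (cfg n) A) A = 0 -> sigma (states (cfg n) A) = sigma0 A) /\
                (forall f : E, 0 < vc (states (cfg n) A) A -> kth_event A (vc (states (cfg n) A) A) f ->
                   sigma (states (cfg n) A) = nu f)
    & forall s, index s lin < n -> (exists B, kind s = KSend B) ->
        exists mu, sent (cfg n) s = Some mu /\ good (mvc mu) (mview mu) (mvar mu) (fun f => le_M f s)].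

Lemma good_ext vcf viewf varsf (D D' : pred E) :
  (forall f, D f = D' f) -> good vcf viewf varsf D -> good vcf viewf varsf D'.
Proof.
move=> HDD G B; case: (G B) => c z v w; split => //.
by rewrite c; apply: eq_card => f; rewrite !inE HDD.
Qed.

Lemma Inv0 : Inv 0.
Proof.
rewrite /Inv take0 /=; split => //.
- move=> A B /=; split => //.
  + apply/esym; apply: eq_card0 => f; rewrite !inE /DA.
    by apply/negbTE; rewrite negb_and; apply/orP; right; apply/existsPn => g.
  + by move=> k f <-.
  + by move=> k f <-.
Qed.

Lemma pred_dec (f e : E) : le_M f e -> f != e -> exists2 h, le_M f h & edge h e.
Proof.
case/connectP=> p Hp Hl nfe.
case/lastP: p Hp Hl => [|q y] /=; first by move=> _ Hfe; rewrite Hfe eqxx in nfe.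
rewrite rcons_path last_rcons => /andP[Hq Hy] Hye; subst y.
exists (last f q) => //; apply/connectP; by exists q.
Qed.

Lemma idx_le (f g : E) : le_M f g -> index f lin <= index g lin.
Proof. by case: Hlin => _ _; apply. Qed.

Lemma idx_inj (f g : E) : index f lin = index g lin -> f = g.
Proof.
case: Hlin => _ Hin _ H.
by rewrite -(nth_index x0 (Hin f)) -(nth_index x0 (Hin g)) H.
Qed.

Lemma idx_nth n : n < size lin -> index (nth x0 lin n) lin = n.
Proof. by case: Hlin => Hu _ _ Hn; rewrite index_uniq. Qed.

Lemma cfg_step n : n < size lin ->
  cfg n.+1 = process interp Phi effect (cfg n) (nth x0 lin n).
Proof. by move=> Hn; rewrite /run (take_nth x0 Hn) foldl_rcons. Qed.

Definition st1_of (c : config Pred M) (e : E) : mstate L Var Pred Val :=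
  if kind e is KRecv then
    match [pick s | msgr s e] with
    | Some s => if sent c s is Some mu then recv_merge (states c (pid e)) mu else states c (pid e)
    | None => states c (pid e)
    end
  else states c (pid e).

Definition st4_of (c : config Pred M) (e : E) :=
  eval_update interp Phi (pid e) (local_update Phi effect (pid e) e (set_old (pid e) (st1_of c e))).

Lemma process_states c e B :
  states (process interp Phi effect c e) B = if B == pid e then st4_of c e else states c B.
Proof. by []. Qed.

Lemma process_sent c e s :
  sent (process interp Phi effect c e) s =
  if (s == e) && (if kind e is KSend _ then true else false)
  then Some (Msg (vc (st4_of c e)) (view (st4_of c e)) (vars (st4_of c e))) else sent c s.
Proof. by []. Qed.

Lemma DA_down n A : downclosed (DA n A).
Proof.
move=> f h /existsP[g /and3P[ig Pg lfg]] lhf; apply/existsP; exists g.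
by rewrite ig Pg (le_M_trans lhf lfg).
Qed.

Lemma msgr_spec (s r : E) : msgr s r -> [/\ kind s = KSend (pid r), kind r = KRecv & pid s <> pid r].
Proof. by case: wf => [[_ _ H _ _] _]; apply: H. Qed.

Lemma recv_uniq (r : E) : kind r = KRecv -> exists! s, msgr s r.
Proof. by case: wf => [[_ _ _ H _] _]; apply: H. Qed.

Lemma st1_good n : Inv n -> n < size lin ->
  let e := nth x0 lin n in
  exists D1 : pred E,
  [/\ good (vc (st1_of (cfg n) e)) (view (st1_of (cfg n) e)) (vars (st1_of (cfg n) e)) D1,
      forall f, le_M f e = D1 f || (f == e),
      ~~ D1 e
    & sigma (st1_of (cfg n) e) = (if last_loc e is Some p then nu p else sigma0 (pid e))].
Proof.
case=> I1 I2 I3 Hn e.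
have ie : index e lin = n by rewrite idx_nth.
set A := pid e.
have K2 : forall f, DA n A f -> le_M f e && (f != e).
  move=> f /existsP[g /and3P[ig /eqP Pg lfg]].
  have lge : le_loc g e.
    case/orP: (le_loc_total wf (Pg : pid g = pid e)) => // leg.
    by have := idx_le (le_loc_M leg); rewrite ie leqNgt ig.
  rewrite (le_M_trans lfg (le_loc_M lge)) /=; apply/eqP => fe; subst f.
  by have := idx_le lfg; rewrite ie leqNgt ig.
have HDgen : forall f, le_M f e -> f != e -> DA n A f \/ (exists2 h, le_M f h & msgr h e).
  move=> f lfe nfe; case: (pred_dec lfe nfe) => h lfh /orP[she|mhe]; last by right; exists h.
  left; apply/existsP; exists h; rewrite lfh (succ_pid wf she) eqxx /= !andbT.
  have nhe : h != e.
    apply/eqP => Hhe; subst h.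
    have : edge e e by rewrite /edge she.
    by move/(wf.2 e e); rewrite connect0.
  have := idx_le (connect1 (_ : edge h e)); rewrite /edge she ie => /(_ isT).
  rewrite leq_eqVlt => /orP[/eqP Hi|//].
  by move: nhe; rewrite (idx_inj (etrans Hi (esym ie))) eqxx.
have Hsig0 : sigma (states (cfg n) A) = (if last_loc e is Some p then nu p else sigma0 (pid e)).
  have [c _ _ _] := I1 A A; have [s0 s1] := I2 A.
  have HS : vc (states (cfg n) A) A = #|Sof e|.
    rewrite c; apply: eq_card => f; rewrite !inE unfold_in /Sof /=.
    case: (eqVneq (pid f) A) => [Pf|] //=.
    apply/idP/idP => [/K2/andP[lfe nfe]|/andP[lfe nfe]].
      by rewrite /lt_loc nfe andbT; apply: (le_M_loc wf Pf).
    apply/existsP; exists f; rewrite Pf eqxx /le_M connect0 /= !andbT.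
    have := idx_le (le_loc_M lfe); rewrite ie leq_eqVlt => /orP[/eqP Hi|//].
    by move: nfe; rewrite (idx_inj (etrans Hi (esym ie))) eqxx.
  case: (last_loc_cases wf e) => [[H0 ->]|[p [pos kth ->]]].
    by apply: s0; rewrite HS H0.
  by apply: s1; rewrite HS.
have Hnr : kind e <> KRecv -> forall f, le_M f e = DA n A f || (f == e).
  move=> Ek f; apply/idP/idP => [lfe|/orP[/K2/andP[]//|/eqP->]]; last exact: connect0.
  case: (eqVneq f e) => [->|nfe]; first by rewrite ?eqxx orbT.
  by case: (HDgen f lfe nfe) => [->//|[h _ /msgr_spec[_ Hk _]]].
have HnD0 : ~~ DA n A e by apply/negP => /K2; rewrite eqxx andbF.
rewrite /st1_of.
case Ek: (kind e) => [| | |B0]; rewrite -/A;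
  try by exists (DA n A); split => //; apply: Hnr; rewrite Ek.
case: (recv_uniq Ek) => s [Hs Huniq].
case: pickP => [s' Hs'|Hnone]; last by have := Hnone s; rewrite Hs.
have ss' : s' = s by apply/esym/Huniq.
subst s'.
case: (msgr_spec Hs) => Ks _ Pse.
have les : le_M s e by apply: connect1; rewrite /edge Hs orbT.
have is_ : index s lin < n.
  have := idx_le les; rewrite ie leq_eqVlt => /orP[/eqP Hi|//].
  by move: Pse; rewrite (idx_inj (etrans Hi (esym ie))).
case: (I3 s is_ (ex_intro _ _ Ks)) => mu [-> Gmu].
exists (fun f => DA n A f || le_M f s); split => //.
- apply: (merge_good wf); [exact: DA_down | by move=> f g Hf Hg; apply: le_M_trans Hg Hf | exact: (I1 A) | exact: Gmu].
- move=> f; apply/idP/idP => [lfe|/orP[/orP[/K2/andP[]//|lfs]|/eqP->]].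
  + case: (eqVneq f e) => [->|nfe]; first by rewrite ?eqxx orbT.
    case: (HDgen f lfe nfe) => [->//|[h lfh mhe]].
    by move: lfh; rewrite -(Huniq h mhe) => ->; rewrite orbT.
  + exact: le_M_trans lfs les.
  + exact: connect0.
- apply/negP => /orP[/K2|les']; first by rewrite eqxx andbF.
  by move: Pse; rewrite (le_M_antisym wf les les').
Qed.

Lemma K2lem n : n < size lin ->
  forall f, DA n (pid (nth x0 lin n)) f -> le_M f (nth x0 lin n) && (f != nth x0 lin n).
Proof.
move=> Hn; set e := nth x0 lin n.
have ie : index e lin = n by rewrite idx_nth.
move=> f /existsP[g /and3P[ig /eqP Pg lfg]].
have lge : le_loc g e.
  case/orP: (le_loc_total wf (Pg : pid g = pid e)) => // leg.
  by have := idx_le (le_loc_M leg); rewrite ie leqNgt ig.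
rewrite (le_M_trans lfg (le_loc_M lge)) /=; apply/eqP => fe; subst f.
by have := idx_le lfg; rewrite ie leqNgt ig.
Qed.

Lemma Inv_step n : Inv n -> n < size lin ->
  Inv n.+1 /\
  good (vc (st4_of (cfg n) (nth x0 lin n))) (view (st4_of (cfg n) (nth x0 lin n)))
       (vars (st4_of (cfg n) (nth x0 lin n))) (fun f => le_M f (nth x0 lin n)).
Proof.
move=> I Hn; have [I1 I2 I3] := I.
have [D1 [G1 HD HnD Hsig]] := st1_good I Hn.
have [G4 S4] := step_good wf valind G1 HD HnD Hsig.
have K2 := K2lem Hn.
move: G1 HD HnD Hsig G4 S4 K2.
set e := nth x0 lin n => G1 HD HnD Hsig G4 S4 K2.
have ie : index e lin = n by rewrite idx_nth.
have G4' : good (vc (st4_of (cfg n) e)) (view (st4_of (cfg n) e)) (vars (st4_of (cfg n) e))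
             (fun f => le_M f e) := G4.
have S4' : sigma (st4_of (cfg n) e) = nu e := S4.
split; last exact: G4'.
rewrite /Inv cfg_step // -/e; split.
- move=> B; rewrite process_states; case: (eqVneq B (pid e)) => [->|nB].
    apply: good_ext G4' => f; apply/idP/existsP => [lfe|[g /and3P[ig /eqP Pg lfg]]].
      by exists e; rewrite ie ltnSn eqxx lfe.
    rewrite ltnS leq_eqVlt in ig; case/orP: ig => [/eqP ig|ig].
      by rewrite -(idx_inj (etrans ig (esym ie))).
    have : DA n (pid e) g by apply/existsP; exists g; rewrite ig Pg eqxx /le_M connect0.
    by move/K2/andP => [lge _]; apply: le_M_trans lfg lge.
  apply: good_ext (I1 B) => f; apply/existsP/existsP => [[g /and3P[ig Pg lfg]]|[g /and3P[ig /eqP Pg lfg]]].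
    by exists g; rewrite ltnS (ltnW ig) Pg lfg.
  exists g; rewrite Pg eqxx lfg /= !andbT.
  rewrite ltnS leq_eqVlt in ig; case/orP: ig => [/eqP ig|//].
  by move: nB; rewrite -Pg (idx_inj (etrans ig (esym ie))) eqxx.
- move=> B1; rewrite process_states; case: (eqVneq B1 (pid e)) => [->|nB]; last exact: I2.
  have [c _ _ _] := G4' (pid e).
  have TE : #|[pred f | (pid f == pid e) && le_M f e]| = #|Tof (pid e) e|.
    by apply: eq_card => f; rewrite inE.
  rewrite c TE; split.
    move=> H0; have := card0_eq H0 e; by rewrite unfold_in /Tof eqxx /le_M connect0.
  move=> f _ kth; rewrite S4'; congr nu.
  apply/esym; apply: (kth_uniq wf kth); apply: (max_kth (ldown_T _ e)); first by rewrite /Tof eqxx /le_M connect0.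
  move=> g /andP[/eqP Pg lge]; exact: (le_M_loc wf Pg lge).
- move=> s is_ Ks; rewrite process_sent; case: (eqVneq s e) => [Hse|nse] /=.
    subst s; case: Ks => B0 Ke; rewrite Ke.
    by exists (Msg (vc (st4_of (cfg n) e)) (view (st4_of (cfg n) e)) (vars (st4_of (cfg n) e))).
  apply: I3 => //.
  rewrite ltnS leq_eqVlt in is_; case/orP: is_ => [/eqP is_|//].
  by move: nse; rewrite (idx_inj (etrans is_ (esym ie))) eqxx.
Qed.

Lemma Inv_all m : m <= size lin -> Inv m.
Proof.
elim: m => [_|m IH Hm]; first exact: Inv0.
by case: (Inv_step (IH (ltnW Hm)) Hm).
Qed.

End Run.

Theorem lemma2
  (L : finType) (Var Pred : eqType) (Val : Type)
  (interp : Pred -> seq Val -> bool)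
  (Phi : seq (formula L Var Pred))
  (M : msc L Var Val)
  (sigma0 : L -> Var -> Val)
  (effect : ev M -> (Var -> Val) -> (Var -> Val))
  (lin : seq (ev M)) (e : ev M) :
  msc_wf M ->
  val_induced sigma0 effect ->
  lin_ext lin ->
  let stA := states (run interp Phi sigma0 effect (take (index e lin).+1 lin)) (pid e) in
  forall B : L,
  [/\ (* (i) *)
      vc stA B = #|[pred f | (pid f == B) && le_M f e]|,
      (* (ii) *)
      vc stA B = 0 ->
        (forall x, vars stA B x = None) /\ (forall psi, view stA B psi = None),
      (* (iii) *)
      forall (k : nat) (f : ev M), vc stA B = k -> 0 < k -> kth_event B k f ->
        forall x, x \in Vars Phi -> vars stA B x = Some (nu f x)
    & (* (iv) *)
      forall (k : nat) (f : ev M), vc stA B = k -> 0 < k -> kth_event B k f ->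
        forall psi, psi \in subs Phi ->
          exists b : bool, view stA B psi = Some b /\ (b = true <-> sat interp psi f)].
Proof.
move=> wf valind Hlin stA B.
have Hin : e \in lin by case: Hlin => _ H _; apply: H.
have Hn : index e lin < size lin by rewrite index_mem.
have I := Inv_all interp Phi wf valind e Hlin (ltnW Hn).
have [_ G] := Inv_step wf valind e Hlin I Hn.
rewrite nth_index // in G.
have -> : stA = st4_of interp Phi effect
             (run interp Phi sigma0 effect (take (index e lin) lin)) e.
  rewrite /stA (cfg_step interp Phi sigma0 effect e Hn) nth_index //.
  by rewrite process_states eqxx.
exact: G B.
Qed.
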